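(* Let $H\in\mathbb{R}^{n\times d}$ have rank $h$, $\Sigma\in\mathbb{R}^{n\times n}$ symmetric positive definite, $\Gamma_0$ the empirical covariance of an initial ensemble, $G_0=\Gamma_0$, $\widetilde{\mathbb{M}}_i=(I+G_iH^\top\Sigma^{-1}H)^{-1}$, $G_{i+1}=\widetilde{\mathbb{M}}_iG_i$. With $\widetilde{\mathbb{P}},\widetilde{\mathbb{Q}},\widetilde{\mathbb{N}}$ as in the context, for every $i\ge0$ these are spectral projectors of $\widetilde{\mathbb{M}}_i$: each commutes with $\widetilde{\mathbb{M}}_i$ and is idempotent, their pairwise products are zero, and $\widetilde{\mathbb{P}}+\widetilde{\mathbb{Q}}+\widetilde{\mathbb{N}}=I$.
   Context: $H^+=(H^\top\Sigma^{-1}H)^\dagger H^\top\Sigma^{-1}$. $\Gamma_0=\frac1{J-1}\sum_j(v_0^{(j)}-\bar v_0)(v_0^{(j)}-\bar v_0)^\top$. Let $C_i=HG_iH^\top$, $r$ the number of positive eigenvalues of $(C_0,\Sigma)$, and $\tilde w_1,\dots,\tilde w_n$ a basis of $\mathbb{R}^n$ with $\tilde w_k^\top\Sigma\tilde w_l$ equal to $1$ if $k=l$, $0$ otherwise, each a generalized eigenvector of $(C_i,\Sigma)$ for every $i$ with eigenvalue $\tilde\delta_{\ell,i}$, where $\tilde w_1,\dots,\tilde w_r\in\mathsf{Ran}(\Sigma^{-1}H)$ have positive eigenvalues, $\tilde w_{r+1},\dots,\tilde w_h\in\mathsf{Ran}(\Sigma^{-1}H)$ eigenvalue zero, $\tilde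 w_{h+1},\dots,\tilde w_n\in\mathsf{Ker}(H^\top)$. Let $\tilde u_\ell=\frac1{\tilde\delta_{\ell,0}}G_0H^\top\tilde w_\ell$ ($\ell\le r$), $\tilde u_\ell=H^+\Sigma\tilde w_\ell$ ($r<\ell\le h$), $\widetilde U=[\tilde u_1,\dots,\tilde u_h]$, $\widetilde U_{k:l}$ its columns $k$ through $l$. $\widetilde{\mathbb{P}}=\widetilde U_{1:r}\widetilde U_{1:r}^\top H^\top\Sigma^{-1}H$, $\widetilde{\mathbb{Q}}=\widetilde U_{r+1:h}\widetilde U_{r+1:h}^\top H^\top\Sigma^{-1}H$, $\widetilde{\mathbb{N}}=I-\widetilde{\mathbb{P}}-\widetilde{\mathbb{Q}}$. *)

(* Defs.v *)
From HB Require Import structures.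
From mathcomp Require Import all_boot all_order all_algebra.
From mathcomp Require Import boolp classical_sets.
Set Implicit Arguments. Unset Strict Implicit. Unset Printing Implicit Defensive.
Import Order.TTheory GRing.Theory Num.Theory.
Local Open Scope ring_scope.

Section Defs.
Variable R : realFieldType.

Definition spd n (S : 'M[R]_n) : Prop :=
  S^T = S /\ forall x : 'cV[R]_n, x != 0 -> 0 < (x^T *m S *m x) 0 0.

Definition penrose m n (A : 'M[R]_(m, n)) (X : 'M[R]_(n, m)) : Prop :=
  [/\ A *m X *m A = A, X *m A *m X = X, (A *m X)^T = A *m X & (X *m A)^T = X *m A].

Definition mpinv m n (A : 'M[R]_(m, n)) : 'M[R]_(n, m) :=
  xget 0 (fun X => penrose A X).

Definition ens_mean d J (v : 'I_J -> 'cV[R]_d) : 'cV[R]_d :=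
  J%:R^-1 *: \sum_(j < J) v j.
Definition emp_cov d J (v : 'I_J -> 'cV[R]_d) : 'M[R]_d :=
  (J.-1)%:R^-1 *: \sum_(j < J) (v j - ens_mean v) *m (v j - ens_mean v)^T.

Definition Hplus n d (H : 'M[R]_(n, d)) (S : 'M[R]_n) : 'M[R]_(d, n) :=
  mpinv (H^T *m invmx S *m H) *m H^T *m invmx S.

Definition Mt n d (H : 'M[R]_(n, d)) (S : 'M[R]_n) (G : 'M[R]_d) : 'M[R]_d :=
  invmx (1%:M + G *m H^T *m invmx S *m H).
Fixpoint Gseq n d (H : 'M[R]_(n, d)) (S : 'M[R]_n) (G0 : 'M[R]_d) (i : nat)
  : 'M[R]_d :=
  match i with
  | 0 => G0
  | i'.+1 => Mt H S (Gseq H S G0 i') *m Gseq H S G0 i'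
  end.

Definition Cseq n d (H : 'M[R]_(n, d)) (S : 'M[R]_n) (G0 : 'M[R]_d) (i : nat)
  : 'M[R]_n := H *m Gseq H S G0 i *m H^T.

(* u_l (0-indexed: l < r uses the first formula, r <= l < h the second) *)
Definition util n d (H : 'M[R]_(n, d)) (S : 'M[R]_n) (G0 : 'M[R]_d)
  (r : nat) (w : nat -> 'cV[R]_n) (delta : nat -> nat -> R) (l : nat) : 'cV[R]_d :=
  if (l < r)%N then (delta l 0%N)^-1 *: (G0 *m H^T *m w l)
  else Hplus H S *m S *m w l.

(* Columns k+1 .. l (1-indexed) of the matrix with columns u_1, u_2, ...,
   i.e. 0-indexed columns k .. l-1. *)
Definition colsU d (u : nat -> 'cV[R]_d) (k l : nat) : 'M[R]_(d, l - k) :=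
  \matrix_(i < d, j < l - k) u (k + j)%N i 0.

Definition Ptil n d (H : 'M[R]_(n, d)) (S : 'M[R]_n) (G0 : 'M[R]_d)
  r (w : nat -> 'cV[R]_n) delta : 'M[R]_d :=
  let U := colsU (util H S G0 r w delta) 0 r in U *m U^T *m H^T *m invmx S *m H.
Definition Qtil n d (H : 'M[R]_(n, d)) (S : 'M[R]_n) (G0 : 'M[R]_d)
  r h (w : nat -> 'cV[R]_n) delta : 'M[R]_d :=
  let U := colsU (util H S G0 r w delta) r h in U *m U^T *m H^T *m invmx S *m H.
Definition Ntil n d (H : 'M[R]_(n, d)) (S : 'M[R]_n) (G0 : 'M[R]_d)
  r h (w : nat -> 'cV[R]_n) delta : 'M[R]_d :=
  1%:M - Ptil H S G0 r w delta - Qtil H S G0 r h w delta.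

End Defs.

(* Main.v *)
Require Import Defs.
From HB Require Import structures.
From mathcomp Require Import all_boot all_order all_algebra.
From mathcomp Require Import boolp classical_sets.
From mathcomp Require Import zify.
Import Order.TTheory GRing.Theory Num.Theory.
Local Open Scope ring_scope.

Section Aux.
Variable R : realFieldType.

Lemma comm_inv d (X Y : 'M[R]_d) : X *m Y = Y *m X -> X *m invmx Y = invmx Y *m X.
Proof.
move=> XY; case: (boolP (Y \in unitmx)) => hu; last by rewrite /invmx (negbTE hu).
rewrite -[X *m invmx Y]mul1mx -(mulVmx hu) -!mulmxA; congr (_ *m _).
by rewrite mulmxA -XY -mulmxA mulmxV // mulmx1.
Qed.

Lemma comm_1p d (X Y : 'M[R]_d) : X *m Y = Y *m X -> X *m (1%:M + Y) = (1%:M + Y) *m X.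
Proof. by move=> e; rewrite mulmxDr mulmxDl mulmx1 mul1mx e. Qed.

Lemma colsU_mul d (u : nat -> 'cV[R]_d) k l :
  colsU u k l *m (colsU u k l)^T = \sum_(j < l - k) u (k + j)%N *m (u (k + j)%N)^T.
Proof.
apply/matrixP => a b; rewrite !mxE summxE; apply: eq_bigr => j _.
by rewrite !mxE big_ord1 !mxE.
Qed.

Lemma sum_prod d (E : nat -> 'M[R]_d) m1 m2 (a : 'I_m1 -> nat) (b : 'I_m2 -> nat) :
  (\sum_(j < m1) E (a j)) *m (\sum_(j < m2) E (b j)) =
  \sum_(j < m1) \sum_(j' < m2) (E (a j) *m E (b j')).
Proof. by rewrite mulmx_suml; apply: eq_bigr => j _; rewrite mulmx_sumr. Qed.

Variables (d h : nat) (E : nat -> 'M[R]_d).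
Hypothesis EE : forall k l, (k < h)%N -> (l < h)%N ->
  E k *m E l = if k == l then E k else 0.

Lemma sum_idem k m : (k + m <= h)%N ->
  (\sum_(j < m) E (k + j)%N) *m (\sum_(j < m) E (k + j)%N) = \sum_(j < m) E (k + j)%N.
Proof.
move=> km; rewrite sum_prod; apply: eq_bigr => j _.
have hj := ltn_ord j.
rewrite (bigD1 j) //= EE ?eqxx; [| lia | lia].
rewrite big1 ?addr0 // => j' hj'.
have hj2 := ltn_ord j'.
rewrite EE; [| lia | lia].
case: eqP => // e; exfalso; move/negP: hj'; apply.
apply/eqP; apply: val_inj => /=; lia.
Qed.

Lemma sum_orth k1 m1 k2 m2 : (k1 + m1 <= h)%N -> (k2 + m2 <= h)%N ->
  ((k1 + m1 <= k2)%N || (k2 + m2 <= k1)%N) ->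
  (\sum_(j < m1) E (k1 + j)%N) *m (\sum_(j < m2) E (k2 + j)%N) = 0.
Proof.
move=> h1 h2 h3; rewrite sum_prod; apply: big1 => j _; apply: big1 => j' _.
have hj := ltn_ord j; have hj' := ltn_ord j'.
rewrite EE; [| lia | lia].
case: eqP => // e; exfalso; move: h3; lia.
Qed.

End Aux.
Arguments comm_inv {R d X Y}.
Arguments comm_1p {R d X Y}.
Arguments sum_idem {R d h E} EE {k m}.
Arguments sum_orth {R d h E} EE {k1 m1 k2 m2}.

Theorem proposition4p10 (R : realFieldType) (n d h J : nat)
  (H : 'M[R]_(n, d)) (Sigma : 'M[R]_n) (v : 'I_J -> 'cV[R]_d)
  (r : nat) (w : nat -> 'cV[R]_n) (delta : nat -> nat -> R) :
  \rank H = h ->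
  spd Sigma ->
  (r <= h)%N -> (h <= n)%N ->
  (* w_0..w_{n-1}: Sigma-orthonormal *)
  (forall k l, (k < n)%N -> (l < n)%N ->
     (w k)^T *m Sigma *m w l = (k == l)%:R%:M) ->
  (* each w_l is a generalized eigenvector of (C_i, Sigma) with eigenvalue delta l i *)
  (forall l i, (l < n)%N ->
     Cseq H Sigma (emp_cov v) i *m w l = delta l i *: (Sigma *m w l)) ->
  (* w_l, l < h, lie in Ran(Sigma^-1 H) *)
  (forall l, (l < h)%N -> exists x : 'cV[R]_d, w l = invmx Sigma *m H *m x) ->
  (* w_l, l < r, have positive eigenvalues *)
  (forall l i, (l < r)%N -> 0 < delta l i) ->
  (* w_l, r <= l < h, have eigenvalue zero *)
  (forall l i, (r <= l)%N -> (l < h)%N -> delta l i = 0) ->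
  (* w_l, h <= l < n, lie in Ker(H^T) *)
  (forall l, (h <= l)%N -> (l < n)%N -> H^T *m w l = 0) ->
  let G0 := emp_cov v in
  let P := Ptil H Sigma G0 r w delta in
  let Q := Qtil H Sigma G0 r h w delta in
  let N := Ntil H Sigma G0 r h w delta in
  forall i : nat,
    let M := Mt H Sigma (Gseq H Sigma G0 i) in
    [/\ [/\ P *m M = M *m P, Q *m M = M *m Q & N *m M = M *m N],
        [/\ P *m P = P, Q *m Q = Q & N *m N = N],
        [/\ [/\ P *m Q = 0, Q *m P = 0, P *m N = 0 & N *m P = 0],
            Q *m N = 0 & N *m Q = 0]
      & P + Q + N = 1%:M].
Proof.
move=> rkH [Ssym Spd] rh hn orth eig ran dpos dzero ker G0 P Q N i M.
pose iS := invmx Sigma.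
pose A := H^T *m iS *m H.
have Su : Sigma \in unitmx.
  rewrite -row_free_unit; apply/inj_row_free => x hx.
  apply/eqP; apply/negPn/negP => xn0.
  have xT : x^T != 0 by rewrite trmx_eq0.
  by move: (Spd _ xT); rewrite trmxK hx mul0mx mxE ltxx.
have hiS : iS *m Sigma = 1%:M by rewrite mulVmx.
have hSi : Sigma *m iS = 1%:M by rewrite mulmxV.
have iSsym : iS^T = iS by rewrite /iS trmx_inv Ssym.
have Asym : A^T = A by rewrite /A !trmx_mul trmxK iSsym mulmxA.

pose c : R := (J.-1)%:R^-1.
pose a := fun j : 'I_J => v j - ens_mean v.
have hG : G0 = c *: \sum_(j < J) a j *m (a j)^T by [].
have G0sym : G0^T = G0.
  rewrite hG linearZ /= linear_sum /=; congr (_ *: _).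
  by apply: eq_bigr => j _; rewrite trmx_mul trmxK.
have G0null : forall y : 'cV[R]_d, y^T *m G0 *m y = 0 -> G0 *m y = 0.
  move=> y hy.
  have e : (y^T *m G0 *m y) 0 0 = c * \sum_(j < J) ((a j)^T *m y) 0 0 ^+ 2.
    rewrite hG -scalemxAr -scalemxAl mulmx_sumr mulmx_suml !mxE summxE.
    congr (_ * _); apply: eq_bigr => j _.
    rewrite (mulmxA y^T (a j) (a j)^T) -(mulmxA (y^T *m a j) (a j)^T y) [LHS]mxE big_ord1 -[y^T *m a j]trmxK trmx_mul trmxK.
    by rewrite {1}mxE expr2.
  rewrite hy mxE in e.
  have [c0|c0] := eqVneq c 0; first by rewrite hG c0 scale0r mul0mx.
  have s0 : \sum_(j < J) ((a j)^T *m y) 0 0 ^+ 2 = 0.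
    by move/esym/eqP: e; rewrite mulf_eq0 (negbTE c0) /= => /eqP.
  rewrite hG -scalemxAl mulmx_suml big1 ?scaler0 // => j _.
  have := psumr_eq0P (fun j _ => sqr_ge0 (((a j)^T *m y) 0 0)) s0 (i:=j) isT.
  move/eqP; rewrite sqrf_eq0 => /eqP z.
  by rewrite -mulmxA [(a j)^T *m y]mx11_scalar z mul_mx_scalar scale0r.

pose u := util H Sigma G0 r w delta.
have eig0 : forall l, (l < n)%N -> H *m G0 *m H^T *m w l = delta l 0 *: (Sigma *m w l).
  by move=> l ln; exact: (eig l 0 ln).
pose xf := fun l => xget 0 (fun x : 'cV[R]_d => w l = iS *m H *m x).
have hx : forall l, (l < h)%N -> w l = iS *m H *m xf l.
  move=> l lh; rewrite /xf; case: xgetP => [x _ px | hno] //.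
  by case: (ran l lh) => x e; case: (hno x e).
have HTw : forall l, (l < h)%N -> H^T *m w l = A *m xf l.
  by move=> l lh; rewrite {1}(hx l lh) /A !mulmxA.
have hHu : forall l, (l < r)%N -> H *m u l = Sigma *m w l.
  move=> l lr; rewrite /u /util lr -scalemxAr !mulmxA eig0; last by lia.
  by rewrite scalerA mulVf ?scale1r // gt_eqF // dpos.
have hAu_r : forall l, (l < r)%N -> A *m u l = H^T *m w l.
  by move=> l lr; rewrite /A -!mulmxA hHu // (mulmxA iS) hiS mul1mx.
have hBu_r : forall l, (l < r)%N -> G0 *m (A *m u l) = delta l 0 *: u l.
  move=> l lr; rewrite hAu_r // /u /util lr scalerA mulfV ?scale1r ?mulmxA //.
  by rewrite gt_eqF // dpos.
have G0HTw : forall l, (r <= l)%N -> (l < h)%N -> G0 *m (H^T *m w l) = 0.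
  move=> l rl lh; apply: G0null.
  by rewrite trmx_mul trmxK -!mulmxA (mulmxA H) (mulmxA _ H^T) eig0 ?dzero ?scale0r ?mulmx0 //; lia.
pose X := mpinv A.
have hXc : penrose A X \/ X = 0.
  rewrite /X /mpinv; case: xgetP => [x _ px | hno]; [by left | by right].
have hu_q : forall l, (r <= l)%N -> u l = X *m H^T *m w l.
  move=> l rl; rewrite /u /util ltnNge rl /= /Hplus -/iS -/A -/X.
  by rewrite -!mulmxA (mulmxA iS) hiS mul1mx.

have hBu_q : forall l, (r <= l)%N -> (l < h)%N -> G0 *m (A *m u l) = 0.
  move=> l rl lh; case: hXc => [[pA _ _ _]|X0].
    by rewrite hu_q // -mulmxA HTw // (mulmxA X) (mulmxA A) (mulmxA A X A) pA -HTw // G0HTw.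
  by rewrite hu_q // X0 !mul0mx !mulmx0.
have gramP : forall k l, (k < r)%N -> (l < r)%N ->
    (u k)^T *m A *m u l = (k == l)%:R%:M.
  move=> k l kr lr; rewrite -mulmxA hAu_r // mulmxA -trmx_mul hHu //.
  by rewrite trmx_mul Ssym orth //; lia.
have hAx : penrose A X -> forall l, (l < h)%N -> A *m u l = A *m xf l.
  move=> [pA _ _ _] l lh; case: (ltnP l r) => lr.
    by rewrite hAu_r // HTw.
  by rewrite hu_q // -mulmxA HTw // (mulmxA X) (mulmxA A) (mulmxA A X A) pA.
have gramF : penrose A X -> forall k l, (k < h)%N -> (l < h)%N ->
    (u k)^T *m A *m u l = (k == l)%:R%:M.
  move=> pX k l kh lh.
  have uA : (u k)^T *m A = (xf k)^T *m A.
    by apply: trmx_inj; rewrite (trmx_mul (u k)^T A) (trmx_mul (xf k)^T A) !trmxK Asym hAx.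
  rewrite uA -mulmxA hAx // mulmxA -orth; try lia.
  rewrite (hx k kh) (hx l lh) !trmx_mul iSsym !mulmxA.
  by rewrite -[_ *m iS *m Sigma]mulmxA hiS mulmx1.
have K : forall k l, (k < h)%N -> (l < h)%N ->
    u k *m ((u k)^T *m A *m u l) = (k == l)%:R *: u k.
  move=> k l kh lh; case: hXc => [pX|X0]; first by rewrite gramF // mul_mx_scalar.
  have hu0 : forall l, (r <= l)%N -> u l = 0.
    by move=> l' rl; rewrite hu_q // X0 !mul0mx.
  case: (ltnP k r) => kr; last by rewrite hu0 // mul0mx scaler0.
  case: (ltnP l r) => lr; first by rewrite gramP // mul_mx_scalar.
  rewrite (hu0 l lr) !mulmx0.
  have /negbTE -> : k != l by rewrite neq_ltn (leq_trans kr lr).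
  by rewrite scale0r.

pose E := fun l => u l *m (u l)^T *m A.
have EE : forall k l, (k < h)%N -> (l < h)%N ->
    E k *m E l = if k == l then E k else 0.
  move=> k l kh lh.
  have e1 : u k *m (u k)^T *m A *m u l = (k == l)%:R *: u k.
    by rewrite -(mulmxA (u k) (u k)^T A) -(mulmxA (u k)) K.
  rewrite /E (mulmxA (u k *m (u k)^T *m A) (u l *m (u l)^T) A).
  rewrite (mulmxA (u k *m (u k)^T *m A) (u l) (u l)^T) e1.
  by case: eqP => [->|_]; [rewrite scale1r | rewrite scale0r !mul0mx].
have hc : forall l, (l < h)%N -> exists c, G0 *m (A *m u l) = c *: u l.
  move=> l lh; case: (ltnP l r) => lr.
    by exists (delta l 0); rewrite hBu_r.
  by exists 0; rewrite hBu_q // scale0r.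
have BE : forall l, (l < h)%N -> E l *m (G0 *m A) = (G0 *m A) *m E l.
  move=> l lh; have [c0 hcl] := hc l lh.
  have t : (u l)^T *m A *m (G0 *m A) = c0 *: ((u l)^T *m A).
    apply: trmx_inj; rewrite linearZ /= (trmx_mul ((u l)^T *m A)) (trmx_mul G0 A).
    rewrite (trmx_mul (u l)^T A) trmxK Asym G0sym -(mulmxA A G0) hcl.
    by rewrite -scalemxAr.
  rewrite /E -(mulmxA (u l)) -(mulmxA (u l)) t -scalemxAr.
  by rewrite (mulmxA (G0 *m A) (u l)) -(mulmxA G0 A (u l)) hcl -scalemxAl.
have hP : P = \sum_(j < r - 0) E (0 + j)%N.
  rewrite /P /Ptil /= colsU_mul !mulmx_suml; apply: eq_bigr => j _.
  by rewrite /E /A !mulmxA.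
have hQ : Q = \sum_(j < h - r) E (r + j)%N.
  rewrite /Q /Qtil /= colsU_mul !mulmx_suml; apply: eq_bigr => j _.
  by rewrite /E /A !mulmxA.

have PB : P *m (G0 *m A) = (G0 *m A) *m P.
  rewrite hP mulmx_suml mulmx_sumr; apply: eq_bigr => j _; apply: BE.
  have := ltn_ord j; lia.
have QB : Q *m (G0 *m A) = (G0 *m A) *m Q.
  rewrite hQ mulmx_suml mulmx_sumr; apply: eq_bigr => j _; apply: BE.
  have := ltn_ord j; lia.
have MtE : forall G, Mt H Sigma G = invmx (1%:M + G *m A).
  by move=> G; rewrite /Mt /A !mulmxA.
have commM : forall Y : 'M[R]_d, Y *m (G0 *m A) = (G0 *m A) *m Y ->
    forall i, Y *m (Gseq H Sigma G0 i *m A) = (Gseq H Sigma G0 i *m A) *m Y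
      /\ Y *m Mt H Sigma (Gseq H Sigma G0 i) = Mt H Sigma (Gseq H Sigma G0 i) *m Y.
  move=> Y hY; elim=> [|k [IH _]].
    by split => //; rewrite MtE; apply/comm_inv/comm_1p.
  have hM := comm_inv (comm_1p IH).
  have e1 : Y *m (Gseq H Sigma G0 k.+1 *m A) = Gseq H Sigma G0 k.+1 *m A *m Y.
    rewrite /= MtE -(mulmxA _ (Gseq H Sigma G0 k) A) mulmxA hM.
    by rewrite -(mulmxA _ Y) IH mulmxA.
  by split => //; rewrite MtE; apply/comm_inv/comm_1p.
have PP : P *m P = P by rewrite hP (sum_idem EE) //; lia.
have QQ : Q *m Q = Q by rewrite hQ (sum_idem EE) //; lia.
have PQ : P *m Q = 0 by rewrite hP hQ (sum_orth EE) //; lia.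
have QP : Q *m P = 0 by rewrite hP hQ (sum_orth EE) //; lia.
have hN : N = 1%:M - P - Q by [].
have PN : P *m N = 0 by rewrite hN !mulmxBr mulmx1 PP PQ !subrr.
have QN : Q *m N = 0 by rewrite hN !mulmxBr mulmx1 QP QQ subr0 subrr.
have NP : N *m P = 0 by rewrite hN !mulmxBl mul1mx PP QP !subrr.
have NQ : N *m Q = 0 by rewrite hN !mulmxBl mul1mx PQ QQ subr0 subrr.
have [_ PM] := commM P PB i.
have [_ QM] := commM Q QB i.
split.
- split => //.
  by rewrite hN !mulmxBl !mulmxBr mul1mx mulmx1 PM QM.
- split => //.
  by rewrite {1}hN !mulmxBl mul1mx PN QN !subr0.
- by [].
- by rewrite hN -(addrA 1%:M) -opprD addrC (addrA (P + Q)) subrr add0r.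
Qed.
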